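(* Let $P\subset\mathbb R^2$ be an $\mathbb R$-$\Delta_2$-free polygon with rational diameter $l=1+2a>1$ (i.e. $a>0$), and suppose the segment $\mathrm{conv}((-a,0),(1+a,0))$ is contained in $P$. Then for every $b\in\mathbb Z$ the interior of $P$ is disjoint from the segments $\mathrm{conv}((b-a,1),(b+a,1))$ and $\mathrm{conv}((b-a,-1),(b+a,-1))$. In particular, if $a\ge\frac12$, then $P\subset\{(x,y): -1\le y\le 1\}$ and $\mathrm{width}(P)\le 2$.
   Context: A polygon is a two-dimensional convex polytope in $\mathbb R^2$. $\Delta_2=\mathrm{conv}(\mathbf 0,e_1,e_2)$. An $\mathbb R$-unimodular transformation is $T(x)=Mx+b$ with $M\in\mathrm{GL}_2(\mathbb Z)$, $b\in\mathbb R^2$; an $\mathbb R$-unimodular copy of $X$ is $T(X)$. A convex set is $\mathbb R$-$\Delta_2$-free if its relative interior contains no $\mathbb R$-unimodular copy of $\Delta_2$. The rational diameter of a convex body $K$ is $\max\{l\ge0: T(\mathrm{conv}(\mathbf 0,le_1))\subset K$ for some $\mathbb R$-unimodular $T\}$. Lattice width: $\mathrm{width}(K)=\inf_{u\in(\mathbb Z^2)^*\setminus\{0\}}\sup_{x,y\in K}|u(x)-u(y)|$. *)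

(* Defs.v *)
From HB Require Import structures.
From mathcomp Require Import all_boot all_order all_algebra.
From mathcomp Require Import all_classical all_reals all_analysis.
Set Implicit Arguments. Unset Strict Implicit. Unset Printing Implicit Defensive.
Import Order.TTheory GRing.Theory Num.Theory numFieldNormedType.Exports.
Local Open Scope classical_set_scope.
Local Open Scope ring_scope.

Section Defs.
Variable R : realType.
Notation pt := (R * R)%type.

Definition conv (s : seq pt) : set pt :=
  [set x | exists w : 'I_(size s) -> R,
     (forall i, 0 <= w i) /\ \sum_(i < size s) w i = 1 /\
     x = (\sum_(i < size s) w i * (nth (0,0) s i).1,
          \sum_(i < size s) w i * (nth (0,0) s i).2)].

Definition seg (p q : pt) : set pt := conv [:: p; q].

Definition is_polygon (P : set pt) : Prop :=
  (exists s : seq pt, P = conv s) /\ interior P !=set0.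

(* R-unimodular transformation x |-> M x + v with M = [[a b];[c d]] in GL_2(Z) *)
Definition unimodular (a b c d : int) : Prop :=
  a * d - b * c = 1 \/ a * d - b * c = -1.

Definition umap (a b c d : int) (v : pt) (x : pt) : pt :=
  (a%:~R * x.1 + b%:~R * x.2 + v.1, c%:~R * x.1 + d%:~R * x.2 + v.2).

Definition is_Runimod (T : pt -> pt) : Prop :=
  exists (a b c d : int) (v : pt), unimodular a b c d /\ T = umap a b c d v.

Definition Delta2 : set pt := conv [:: (0,0); (1,0); (0,1)].

(* for a polygon the relative interior is the interior *)
Definition Delta2_free_polygon (P : set pt) : Prop :=
  ~ exists T, is_Runimod T /\ T @` Delta2 `<=` interior P.

Definition is_rational_diameter (K : set pt) (l : R) : Prop :=
  0 <= l /\
  (exists T, is_Runimod T /\ T @` seg (0,0) (l,0) `<=` K) /\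
  (forall l', 0 <= l' -> (exists T, is_Runimod T /\ T @` seg (0,0) (l',0) `<=` K) ->
     l' <= l).

Definition width_dir (K : set pt) (u : int * int) : R :=
  sup [set `|(u.1%:~R * x.1 + u.2%:~R * x.2) - (u.1%:~R * y.1 + u.2%:~R * y.2)|
       | x in K & y in K].

Definition lattice_width (K : set pt) : R :=
  inf [set width_dir K u | u in [set u : int * int | u != (0, 0)]].

End Defs.

(* Main.v *)
Require Import Defs.
From HB Require Import structures.
From mathcomp Require Import all_boot all_order all_algebra.
From mathcomp Require Import all_classical all_reals all_analysis.
From mathcomp Require Import ring lra.
Import Order.TTheory GRing.Theory Num.Theory numFieldNormedType.Exports.
Local Open Scope classical_set_scope.
Local Open Scope ring_scope.

Definition cvx {R : realType} (S : set (R*R)) :=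
  forall x y t, S x -> S y -> 0 <= t <= 1 ->
    S (t * x.1 + (1 - t) * y.1, t * x.2 + (1 - t) * y.2).

Lemma intE (R : realType) (P : set (R*R)) x :
  interior P x <-> exists2 e : R, 0 < e & forall y : R*R, `|x.1 - y.1| < e -> `|x.2 - y.2| < e -> P y.
Proof.
rewrite /interior nbhs_ballP; split.
  case=> e e0 H; exists e => // y h1 h2; apply: H; split => /=; rewrite -ball_normE /=; done.
case=> e e0 H; exists e => // y [] /=; rewrite -!ball_normE /=; exact: H.
Qed.

Lemma int_sub (R : realType) (P : set (R*R)) x : interior P x -> P x.
Proof. by case/intE=> e e0 H; apply: H; rewrite subrr normr0. Qed.

Lemma conv_cvx (R : realType) (s : seq (R*R)) : cvx (Defs.conv s).
Proof.
move=> x y t [w [w0 [w1 ->]]] [v [v0 [v1 ->]]] /andP[t0 t1].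
exists (fun i => t * w i + (1 - t) * v i); split.
  move=> i; apply: addr_ge0; apply: mulr_ge0 => //; lra.
split.
  by rewrite big_split /= -!mulr_sumr w1 v1; lra.
congr (_, _); rewrite !mulr_sumr -big_split /=; apply: eq_bigr => i _; ring.
Qed.

Lemma seg_in (R : realType) (p q : R*R) t : 0 <= t <= 1 ->
  seg p q ((1 - t) * p.1 + t * q.1, (1 - t) * p.2 + t * q.2).
Proof.
move=> /andP[t0 t1].
exists (fun i : 'I_2 => if val i == 0%N then 1 - t else t); split.
  by case=> [[|n]] _ /=; lra.
split; first by rewrite !big_ord_recl big_ord0 /=; lra.
by rewrite !big_ord_recl !big_ord0 /= !addr0.
Qed.

Lemma seg_out (R : realType) (p q x : R*R) : seg p q x ->
  exists t, 0 <= t <= 1 /\ x = ((1 - t) * p.1 + t * q.1, (1 - t) * p.2 + t * q.2).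
Proof.
case=> w [w0 [w1 ->]]; move: w1; rewrite !big_ord_recl !big_ord0 /= !addr0 => w1.
exists (w (lift ord0 ord0)); split.
  have := w0 ord0; have := w0 (lift ord0 ord0); lra.
have -> : w ord0 = 1 - w (lift ord0 ord0) by lra.
by [].
Qed.

Lemma L1 (R : realType) (P : set (R*R)) z w t : cvx P -> interior P z -> P w ->
  0 < t <= 1 -> interior P (t * z.1 + (1 - t) * w.1, t * z.2 + (1 - t) * w.2).
Proof.
move=> cP /intE [e e0 H] Pw /andP[t0 t1]; apply/intE.
exists (t * e); first exact: mulr_gt0.
move=> y /= h1 h2.
pose z' := ((y.1 - (1 - t) * w.1) / t, (y.2 - (1 - t) * w.2) / t).
have tn0 : t != 0 by rewrite gt_eqF.
have Pz' : P z'.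
  apply: H; rewrite /z' /=.
    have -> : z.1 - (y.1 - (1 - t) * w.1) / t = (t * z.1 + (1 - t) * w.1 - y.1) / t by field.
    by rewrite normrM normfV (gtr0_norm t0) ltr_pdivrMr // (mulrC e t).
  have -> : z.2 - (y.2 - (1 - t) * w.2) / t = (t * z.2 + (1 - t) * w.2 - y.2) / t by field.
  by rewrite normrM normfV (gtr0_norm t0) ltr_pdivrMr // (mulrC e t).
have := cP z' w t Pz' Pw; rewrite t1 ltW //= => /(_ isT).
have -> : (t * z'.1 + (1 - t) * w.1, t * z'.2 + (1 - t) * w.2) = y.
  rewrite /z' /=; clear Pz' z'; by case: y h1 h2 => y1 y2 /= _ _; congr (_, _); field.
by [].
Qed.

Lemma int_cvx (R : realType) (P : set (R*R)) : cvx P -> cvx (interior P).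
Proof.
move=> cP x y t ix iy /andP[t0 t1].
have [->|tp] := eqVneq t 0.
  by rewrite !mul0r subr0 !mul1r !add0r; case: y iy.
apply: L1 => //; first exact: int_sub.
by rewrite t1 lt_neqAle eq_sym tp t0.
Qed.

Lemma cvx3 (R : realType) (S : set (R*R)) A B C w0 w1 w2 : cvx S ->
  S A -> S B -> S C -> 0 <= w0 -> 0 <= w1 -> 0 <= w2 -> w0 + w1 + w2 = 1 ->
  S (w0 * A.1 + w1 * B.1 + w2 * C.1, w0 * A.2 + w1 * B.2 + w2 * C.2).
Proof.
move=> cS SA SB SC h0 h1 h2 hs.
have [e2|n2] := eqVneq w2 1.
  have e0 : w0 = 0 by lra.
  have e1 : w1 = 0 by lra.
  by rewrite e0 e1 e2 !mul0r !add0r !mul1r; case: C SC.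
have sp : 0 < 1 - w2 by rewrite subr_gt0 lt_neqAle n2 /=; lra.
have sn0 : 1 - w2 != 0 by rewrite gt_eqF.
have SM := cS A B (w0 / (1 - w2)) SA SB.
have : S (w0 / (1 - w2) * A.1 + (1 - w0 / (1 - w2)) * B.1,
          w0 / (1 - w2) * A.2 + (1 - w0 / (1 - w2)) * B.2).
  apply: SM; apply/andP; split; first by apply: divr_ge0 => //; lra.
  by rewrite ler_pdivrMr // mul1r; lra.
move=> SM'.
have := cS _ C (1 - w2) SM' SC; rewrite /=.
have -> : 1 - (1 - w2) = w2 by ring.
move=> /(_ _)  H.
have -> : (w0 * A.1 + w1 * B.1 + w2 * C.1, w0 * A.2 + w1 * B.2 + w2 * C.2) =
  ((1 - w2) * (w0 / (1 - w2) * A.1 + (1 - w0 / (1 - w2)) * B.1) + w2 * C.1,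
   (1 - w2) * (w0 / (1 - w2) * A.2 + (1 - w0 / (1 - w2)) * B.2) + w2 * C.2).
  have -> : w1 = 1 - w2 - w0 by lra.
  by congr (_, _); field.
apply: H; apply/andP; split; lra.
Qed.

Lemma core (R : realType) (P : set (R*R)) (a : R) (sg b : int) (c : R) :
  cvx P -> Delta2_free_polygon P -> 0 < a -> (sg = 1 \/ sg = -1) ->
  (forall x, -a <= x <= 1 + a -> P (x, 0)) ->
  interior P (c, sg%:~R) -> `|c - b%:~R| <= a -> False.
Proof.
move=> cP DF a0 hsg base iq hcb.
have /intE [e e0 H] := iq.
set s : R := sg%:~R.
have hs : s = 1 \/ s = -1.
  by rewrite /s; case: hsg => ->; [left|right]; rewrite ?mulrNz.
set B : R := b%:~R.
have [m [m0 [ma me]]] : exists m, 0 < m /\ m <= a/4 /\ m <= e/4.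
  by have [hae|hae] := leP a e; [exists (a/4)|exists (e/4)]; lra.
move: hcb; rewrite ler_norml => /andP[hcb1 hcb2].
have [p [hp1 [hp2 [hp3 hp4]]]] : exists p, -a + m <= p /\ p <= a - m /\ - m <= p - (c - B) /\ p - (c - B) <= m.
  by have [h|h] := leP 0 (c - B); [exists (c - B - m) | exists (c - B + m)]; lra.
have hc1 : c <= `|c| := ler_norm c.
have hc2 : - c <= `|c| by rewrite -normrN ler_norm.
set D := `|c| + 1 + a.
have Dp : 1 + a <= D by rewrite /D; lra.
have Dn0 : D != 0 by rewrite gt_eqF //; lra.
set t := m / D.
have tD : t * `|c| + t + t * a = m.
  by rewrite -[m](divfK Dn0) -/t /D; ring.
have t0 : 0 < t by rewrite divr_gt0 //; lra.
have tm : t <= m by rewrite /t ler_pdivrMr; nra.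
have t1 : t < 1 by rewrite /t ltr_pdivrMr ?mul1r; lra.
have tc1 : t * c <= t * `|c| by rewrite ler_wpM2l //; lra.
have tc2 : - (t * c) <= t * `|c| by rewrite -mulrN ler_wpM2l //; lra.
have tn1 : 0 < 1 - t by lra.
have tn1' : 1 - t != 0 by rewrite gt_eqF.
have tt : 0 < t <= 1 by apply/andP; split; lra.
have iA : interior P (p, s * t).
  have PA : P ((p - t * c) / (1 - t), 0).
    apply: base; apply/andP; split.
      by rewrite ler_pdivlMr //; nra.
    by rewrite ler_pdivrMr //; nra.
  have := L1 _ _ _ _ _ cP iq PA tt; rewrite /=.
  have -> : t * c + (1 - t) * ((p - t * c) / (1 - t)) = p by field.
  by rewrite mulr0 addr0 mulrC.
have iB : interior P (p + 1, s * t).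
  have PB : P ((p + 1 - t * c) / (1 - t), 0).
    apply: base; apply/andP; split.
      by rewrite ler_pdivlMr //; nra.
    by rewrite ler_pdivrMr //; nra.
  have := L1 _ _ _ _ _ cP iq PB tt; rewrite /=.
  have -> : t * c + (1 - t) * ((p + 1 - t * c) / (1 - t)) = p + 1 by field.
  by rewrite mulr0 addr0 mulrC.
have iC : interior P (B + p, s + s * t).
  apply/intE; exists (e / 2); first by lra.
  move=> y /=; rewrite !ltr_norml => /andP[h1 h2] /andP[h3 h4].
  apply: H; rewrite /= !ltr_norml; apply/andP; split; try lra.
  by case: hs => hs; rewrite hs in h3 h4 *; lra.
  by case: hs => hs; rewrite hs in h3 h4 *; lra.
apply: DF; exists (umap 1 b 0 sg (p, s * t)); split.
  exists 1, b, 0, sg, (p, s * t); split => //.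
  by rewrite /unimodular mul1r mulr0 subr0.
move=> _ [x [w [w0 [w1 ->]]] <-].
move: w1; rewrite !big_ord_recl !big_ord0 /= => w1.
rewrite /umap /=.
have HH := @cvx3 R _ _ _ _ (w ord0) (w (lift ord0 ord0)) (w (lift ord0 (lift ord0 ord0))) (@int_cvx R P cP) iA iB iC (w0 _) (w0 _) (w0 _) (ltac:(by rewrite addr0 addrA in w1)).
move: HH; rewrite /= -/B -/s.
have ew : w ord0 = 1 - w (lift ord0 ord0) - w (lift ord0 (lift ord0 ord0)).
  by rewrite addr0 in w1; lra.
match goal with |- P° ?X -> P° ?Y => suff -> : X = Y by [] end.
rewrite ew; congr (_, _); rewrite ?mulr1z ?mulr0z; ring.
Qed.

Lemma strip (R : realType) (P : set (R*R)) (a : R) (sg : int) (z : R*R) :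
  cvx P -> Delta2_free_polygon P -> 0 < a -> 1 / 2 <= a -> (sg = 1 \/ sg = -1) ->
  (forall x, -a <= x <= 1 + a -> P (x, 0)) ->
  interior P !=set0 -> P z -> 1 < sg%:~R * z.2 -> False.
Proof.
move=> cP DF a0 ha hsg base [i ii] Pz hz.
set s : R := sg%:~R in hz.
have hs : s = 1 \/ s = -1.
  by rewrite /s; case: hsg => ->; [left|right]; rewrite ?mulrNz.
have ss : s * s = 1 by case: hs => ->; ring.
have sn0 : s != 0 by case: hs => ->; rewrite ?oppr_eq0 oner_eq0.
have sfix : forall Y, s * Y = 1 -> Y = s.
  by move=> Y hY; rewrite -[Y]mul1r -ss -mulrA hY mulr1.
have [c ic] : exists c, interior P (c, s).
  have [h|h] := leP (s * i.2) 1.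
    have dp : 0 < s * z.2 - s * i.2 by lra.
    have dn0 : s * z.2 - s * i.2 != 0 by rewrite gt_eqF.
    set t := (s * z.2 - 1) / (s * z.2 - s * i.2).
    have tt : 0 < t <= 1.
      apply/andP; split; first by rewrite divr_gt0 //; lra.
      by rewrite ler_pdivrMr // mul1r; lra.
    have := L1 _ _ _ _ _ cP ii Pz tt; rewrite /=.
    have -> : t * i.2 + (1 - t) * z.2 = s.
      by apply: sfix; rewrite /t; field.
    by move=> H; eexists; exact: H.
  have dp : 0 < s * i.2 by lra.
  have dn0 : s * i.2 != 0 by rewrite gt_eqF.
  set t := 1 / (s * i.2).
  have tt : 0 < t <= 1.
    apply/andP; split; first by rewrite divr_gt0 //; lra.
    by rewrite ler_pdivrMr // mul1r; lra.
  have P0 : P (0, 0) by apply: base; lra.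
  have := L1 _ _ _ _ _ cP ii P0 tt; rewrite /=.
  have -> : t * i.2 + (1 - t) * 0 = s.
    apply: sfix; rewrite /t; field.
    by move: dn0; rewrite mulf_eq0 negb_or andbC.
  by move=> H; eexists; exact: H.
have := floor_itv (c + 1 / 2); set b := Num.floor _ => /andP[hb1 hb2].
apply: (@core R P a sg b c cP DF a0 hsg base ic).
rewrite ler_norml; rewrite intrD in hb2; apply/andP; split; lra.
Qed.

Lemma wd_ge0 (R : realType) (K : set (R*R)) u : 0 <= width_dir K u.
Proof.
rewrite /width_dir.
set E := [set _ | _ in _ & _ in _].
have [hs|hs] := pselect (has_sup E); last by rewrite sup_out.
case: (hs) => -[y Ey] _.
apply: le_trans (sup_upper_bound hs Ey).
by case: Ey => x _ [z _ <-].
Qed.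

Theorem lemma5p4 (R : realType) (P : set (R * R)) (a : R) :
  is_polygon P -> Delta2_free_polygon P -> 0 < a ->
  is_rational_diameter P (1 + 2 * a) ->
  seg (- a, 0) (1 + a, 0) `<=` P ->
  (forall b : int,
     interior P `&` seg (b%:~R - a, 1) (b%:~R + a, 1) = set0 /\
     interior P `&` seg (b%:~R - a, -1) (b%:~R + a, -1) = set0) /\
  (1 / 2 <= a ->
     P `<=` [set p | -1 <= p.2 <= 1] /\ lattice_width P <= 2).
Proof.
move=> [[sq Pe] ine] DF a0 _ hseg.
have cP : cvx P by rewrite Pe; exact: conv_cvx.
have base : forall x, -a <= x <= 1 + a -> P (x, 0).
  move=> x hx; apply: hseg.
  have hd : 0 < 1 + 2 * a by lra.
  have := @seg_in R (- a, 0) (1 + a, 0) ((x + a) / (1 + 2 * a)).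
  rewrite /= !mulr0 addr0.
  have -> : (1 - (x + a) / (1 + 2 * a)) * - a + (x + a) / (1 + 2 * a) * (1 + a) = x.
    by field; rewrite gt_eqF.
  apply; apply/andP; split; first by rewrite divr_ge0 //; lra.
  by rewrite ler_pdivrMr // mul1r; lra.
split.
  move=> b; split; apply/seteqP; split => // y [iy sy]; case/seg_out: sy iy => t [ht ->] /= iy.
    apply: (@core R P a 1 b ((1 - t) * (b%:~R - a) + t * (b%:~R + a)) cP DF a0 (or_introl erefl) base).
      move: iy; match goal with |- P° ?X -> P° ?Y => suff -> : X = Y by [] end.
      by congr (_, _); rewrite mulr1z; ring.
    rewrite ler_norml; apply/andP; split; nra.
  apply: (@core R P a (-1) b ((1 - t) * (b%:~R - a) + t * (b%:~R + a)) cP DF a0 (or_intror erefl) base).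
    move: iy; match goal with |- P° ?X -> P° ?Y => suff -> : X = Y by [] end.
    by congr (_, _); rewrite mulrNz mulr1z; ring.
  rewrite ler_norml; apply/andP; split; nra.
move=> ha.
have P0 : P (0, 0) by apply: base; lra.
have hstrip : P `<=` [set p | -1 <= p.2 <= 1].
  move=> z Pz /=; apply/andP; split; rewrite leNgt; apply/negP => h.
    apply: (@strip R P a (-1) z cP DF a0 ha (or_intror erefl) base ine Pz).
    by rewrite mulrNz mulr1z; lra.
  apply: (@strip R P a 1 z cP DF a0 ha (or_introl erefl) base ine Pz).
  by rewrite mulr1z; lra.
split => //.
have hw : width_dir P (0, 1) <= 2.
  rewrite /width_dir; apply: ge_sup.
    by exists `|0%:~R * 0 + 1%:~R * 0 - (0%:~R * 0 + 1%:~R * 0)|; exists (0, 0) => //; exists (0, 0).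
  move=> _ [x Px [y Py <-]] /=.
  have := hstrip _ Px; have := hstrip _ Py; rewrite /= => /andP[? ?] /andP[? ?].
  rewrite mulr1z mulr0z !mul0r !add0r ler_norml; apply/andP; split; lra.
have lb : has_lbound [set width_dir P u | u in [set u : int * int | u != (0, 0)]].
  by exists 0 => _ [u _ <-]; exact: wd_ge0.
rewrite /lattice_width; apply: le_trans hw; apply: (ge_inf lb).
by exists (0, 1).
Qed.
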